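(* Let $\hat K$ be a knot. The linking form of $\hat K\#\hat K$ has trivial isotropic cone (i.e. $\Lambda_0(\hat K\#\hat K)=\{0\}$) if and only if $\det(\hat K)$ is a product of distinct primes, each of which is congruent to $3\bmod 4$.
   Context: For a knot $K\subset S^3$, $D_K$ is the double branched cover of $S^3$ over $K$; $H_1(D_K;\mathbb{Z})$ is finite of odd order $\det(K)=|\Delta_K(-1)|$, and $\lambda:H_1(D_K)\times H_1(D_K)\to\mathbb{Q}/\mathbb{Z}$ is the standard symmetric non-degenerate linking form. The isotropic cone is $\Lambda_0(K)=\{g\in H_1(D_K):\lambda(g,g)=0\}$. $\hat K\#\hat K$ is the connected sum of $\hat K$ with itself (so its $H_1$ with linking form is the orthogonal sum of two copies of that of $\hat K$). *)

(* Defs.v *)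
From mathcomp Require Import all_boot all_order all_algebra.
Set Implicit Arguments. Unset Strict Implicit. Unset Printing Implicit Defensive.
Import Order.TTheory GRing.Theory Num.Theory.
Local Open Scope ring_scope.

(* Q/Z-valued forms are represented by rat-valued functions, read modulo
   the integers: a value q : rat stands for its class in Q/Z, and
   "q = 0 in Q/Z" is "q \is a Num.int". *)
Definition qz_zero (q : rat) : bool := q \is a Num.int.

Definition linking_form (G : finZmodType) (lam : G -> G -> rat) : Prop :=
  [/\ (forall x y, qz_zero (lam x y - lam y x)),
      (forall x y z, qz_zero (lam (x + y) z - (lam x z + lam y z)))
    & (forall x, x != 0 -> exists y, ~~ qz_zero (lam x y)) ].

Definition double_form (G : finZmodType) (lam : G -> G -> rat)
  : (G * G)%type -> (G * G)%type -> rat :=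
  fun u v => lam u.1 v.1 + lam u.2 v.2.

Definition trivial_isotropic_cone (H : zmodType) (lam : H -> H -> rat)
  : Prop := forall g : H, qz_zero (lam g g) -> g = 0.

Definition distinct_primes_3mod4 (n : nat) : Prop :=
  exists s : seq nat, [/\ uniq s, all prime s,
    all (fun p => p %% 4 == 3)%N s & n = (\prod_(p <- s) p)%N ].

(* Main.v *)
Require Import Defs.
From mathcomp Require Import all_boot all_order all_algebra all_fingroup all_solvable all_field.
From mathcomp Require Import zify ring.
Set Implicit Arguments. Unset Strict Implicit. Unset Printing Implicit Defensive.

Lemma dp_char n : distinct_primes_3mod4 n -> forall p, prime p -> p %| n ->
  (p %% 4 = 3) /\ exists m, n = p * m /\ ~~ (p %| m).
Proof.
move=> [s [us ps s4 ->]] p pp pd.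
have ps' : p \in s.
  move: pd; rewrite Euclid_dvd_prod // big_has => /hasP[q qs pq].
  have qp : prime q := allP ps q qs.
  by move: pq; rewrite dvdn_prime2 // => /eqP ->.
split; first by apply/eqP; exact: (allP s4).
exists (\prod_(q <- s | q != p) q); split; first by rewrite (bigD1_seq p).
rewrite Euclid_dvd_prod // big_has_cond; apply/hasPn => q qs /=.
have qpr : prime q := allP ps q qs.
apply/negP => /andP[qp pq]; move: pq; rewrite dvdn_prime2 //.
by rewrite eq_sym (negPf qp).
Qed.

Lemma dp_build n : 0 < n -> (forall p, prime p -> p %| n -> p %% 4 = 3 /\ logn p n <= 1) ->
  distinct_primes_3mod4 n.
Proof.
move=> n0 H; exists (primes n); split.
- exact: primes_uniq.
- by apply/allP => p; rewrite mem_primes => /andP[].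
- apply/allP => p; rewrite mem_primes => /and3P[pp _ pd].
  by have [-> _] := H p pp pd.
- rewrite {1}(prod_prime_decomp n0) prime_decompE big_map /=.
  apply: eq_big_seq => p; rewrite mem_primes => /and3P[pp _ pd].
  have [_ l1] := H p pp pd.
  have l0 : 0 < logn p n by rewrite logn_gt0 mem_primes pp n0 pd.
  by have -> : logn p n = 1 by apply/eqP; rewrite eqn_leq l1 l0.
Qed.

Import Order.TTheory GRing.Theory Num.Theory FinRing.Theory.
Local Open Scope ring_scope.

Definition eqQZ (a b : rat) := qz_zero (a - b).

Lemma qzD a b : qz_zero a -> qz_zero b -> qz_zero (a + b).
Proof. by move=> h1 h2; rewrite /qz_zero rpredD. Qed.
Lemma qzN a : qz_zero a -> qz_zero (- a).
Proof. by move=> h; rewrite /qz_zero rpredN. Qed.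
Lemma qzMn a n : qz_zero a -> qz_zero (n%:R * a).
Proof. by move=> h; rewrite /qz_zero rpredM ?natr_int. Qed.
Lemma qz_nat n : qz_zero n%:R.
Proof. exact: natr_int. Qed.

Lemma eqQZ_refl a : eqQZ a a.
Proof. by rewrite /eqQZ subrr /qz_zero int_num0. Qed.
Lemma eqQZ_sym a b : eqQZ a b -> eqQZ b a.
Proof. by rewrite /eqQZ => h; rewrite -opprB; apply: qzN. Qed.
Lemma eqQZ_trans a b c : eqQZ a b -> eqQZ b c -> eqQZ a c.
Proof. by rewrite /eqQZ => h1 h2; have := qzD h1 h2; rewrite addrA subrK. Qed.
Lemma eqQZ_D a b c d : eqQZ a b -> eqQZ c d -> eqQZ (a + c) (b + d).
Proof. by rewrite /eqQZ => h1 h2; have := qzD h1 h2; rewrite opprD addrACA. Qed.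
Lemma eqQZ_Mn n a b : eqQZ a b -> eqQZ (n%:R * a) (n%:R * b).
Proof. by rewrite /eqQZ => h; rewrite -mulrBr; apply: qzMn. Qed.
Lemma eqQZ_qz a b : eqQZ a b -> qz_zero b -> qz_zero a.
Proof. by rewrite /eqQZ => h1 h2; have := qzD h1 h2; rewrite subrK. Qed.
Lemma qz_eqQZ0 a : qz_zero a -> eqQZ a 0.
Proof. by rewrite /eqQZ subr0. Qed.

Lemma qz_coprime a b r : coprime a b -> qz_zero (a%:R * r) -> qz_zero (b%:R * r) -> qz_zero r.
Proof.
move=> cab ha hb.
have [u [v Huv]] : exists u v : int, u * a%:Z + v * b%:Z = 1.
  have [u [v]] := Bezoutz a b. rewrite /gcdz /= (eqP cab) => h.
  by exists u, v.
have H : (u%:~R * a%:R + v%:~R * b%:R : rat) = 1.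
  by have := congr1 (fun z : int => z%:~R : rat) Huv; rewrite /= intrD !intrM.
have -> : r = u%:~R * (a%:R * r) + v%:~R * (b%:R * r).
  by rewrite !mulrA -mulrDl H mul1r.
by apply: qzD; rewrite /qz_zero rpredM ?intr_int.
Qed.


Lemma lam_sym (G : finZmodType) (lam : G -> G -> rat) : linking_form lam ->
  forall x y, eqQZ (lam x y) (lam y x).
Proof. by case. Qed.

Lemma lamDl (G : finZmodType) (lam : G -> G -> rat) : linking_form lam ->
  forall x y z, eqQZ (lam (x + y) z) (lam x z + lam y z).
Proof. by case. Qed.

Lemma lamDr (G : finZmodType) (lam : G -> G -> rat) : linking_form lam ->
  forall x y z, eqQZ (lam z (x + y)) (lam z x + lam z y).
Proof.
move=> h x y z; apply: eqQZ_trans (lam_sym h _ _) _.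
apply: eqQZ_trans (lamDl h _ _ _) _.
by apply: eqQZ_D; apply: lam_sym.
Qed.

Lemma lamMnl (G : finZmodType) (lam : G -> G -> rat) : linking_form lam ->
  forall x n z, eqQZ (lam (x *+ n) z) (n%:R * lam x z).
Proof.
move=> h x n z; elim: n => [|n IH].
  rewrite mulr0n mul0r.
  have := lamDl h 0 0 z; rewrite addr0 /eqQZ opprD addrA subrr add0r.
  by move=> H; rewrite subr0 -[lam 0 z]opprK; apply: qzN.
rewrite mulrSr -addn1 natrD mulrDl mul1r.
apply: eqQZ_trans (lamDl h _ _ _) _.
exact: eqQZ_D IH (eqQZ_refl _).
Qed.

Lemma lamMnr (G : finZmodType) (lam : G -> G -> rat) : linking_form lam ->
  forall x n z, eqQZ (lam z (x *+ n)) (n%:R * lam z x).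
Proof.
move=> h x n z; apply: eqQZ_trans (lam_sym h _ _) _.
apply: eqQZ_trans (lamMnl h _ _ _) _.
by apply: eqQZ_Mn; apply: lam_sym.
Qed.

Lemma lam_tors_l (G : finZmodType) (lam : G -> G -> rat) : linking_form lam ->
  forall x n z, x *+ n = 0 -> qz_zero (n%:R * lam x z).
Proof.
move=> h x n z hx; apply: eqQZ_qz (eqQZ_sym (lamMnl h x n z)) _.
rewrite hx -(mulr0n (0 : G)).
by apply: eqQZ_qz (lamMnl h _ _ _) _; rewrite mul0r /qz_zero int_num0.
Qed.

Lemma lam_tors_r (G : finZmodType) (lam : G -> G -> rat) : linking_form lam ->
  forall x n z, x *+ n = 0 -> qz_zero (n%:R * lam z x).
Proof.
move=> h x n z hx; apply: eqQZ_qz (eqQZ_Mn n (lam_sym h z x)) _.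
exact: lam_tors_l.
Qed.

Lemma lam_quad (G : finZmodType) (lam : G -> G -> rat) : linking_form lam ->
  forall u v i j, qz_zero (lam u v) ->
  eqQZ (lam (u *+ i + v *+ j) (u *+ i + v *+ j))
       ((i * i)%:R * lam u u + (j * j)%:R * lam v v).
Proof.
move=> h u v i j huv.
have hvu : qz_zero (lam v u) by apply: eqQZ_qz (lam_sym h _ _) huv.
have E1 : forall a b k l, eqQZ (lam (a *+ k) (b *+ l)) ((k * l)%:R * lam a b).
  move=> a b k l; apply: eqQZ_trans (lamMnl h _ _ _) _.
  rewrite natrM -mulrA; apply: eqQZ_Mn; exact: lamMnr.
apply: eqQZ_trans (lamDl h _ _ _) _.
have -> : (i * i)%:R * lam u u + (j * j)%:R * lam v v =
   ((i * i)%:R * lam u u + 0) + (0 + (j * j)%:R * lam v v) by rewrite addr0 add0r.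
apply: eqQZ_D; apply: eqQZ_trans (lamDr h _ _ _) _; apply: eqQZ_D => //.
- apply: eqQZ_trans (E1 _ _ _ _) _; apply: qz_eqQZ0; exact: qzMn.
- apply: eqQZ_trans (E1 _ _ _ _) _; apply: qz_eqQZ0; exact: qzMn.
Qed.


Lemma Fp_nat_eq0 p n : prime p -> ((n%:R : 'F_p) == 0) = (p %| n)%N.
Proof. by move=> pp; rewrite -(dvdn_pcharf (pchar_Fp pp)). Qed.

Lemma NT1 p c : prime p -> (p %% 4 = 3)%N -> ~~ (p %| c ^ 2 + 1)%N.
Proof.
move=> pp p4; apply/negP; rewrite -Fp_nat_eq0 // natrD natrX => /eqP hb.
set b : 'F_p := c%:R in hb.
have b0 : b != 0 by apply/eqP => b0; move/eqP: hb; rewrite b0 expr0n /= add0r oner_eq0.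
have hb2 : b ^+ 2 = -1 by apply/eqP; rewrite -subr_eq0 opprK hb.
have hp : (2 * (2 * (p %/ 4) + 1) + 1 = p)%N.
  by rewrite {2}(divn_eq p 4) p4 mulnDr muln1 mulnA -addnA mulnC.
have : b ^+ (2 * (2 * (p %/ 4) + 1) + 1) = b by rewrite hp; move: (expf_card b); rewrite card_Fp.
rewrite exprD expr1 exprM hb2 exprD expr1 exprM sqrrN !expr1n mul1r mulN1r => /eqP.
rewrite eq_sym -subr_eq0 opprK -mulr2n -mulr_natl mulf_eq0 (negPf b0) orbF Fp_nat_eq0 //.
rewrite dvdn_prime2 // => /eqP p2; by rewrite p2 in p4.
Qed.

Lemma Fp_val p (t : 'F_p) : prime p -> ((t : nat)%:R : 'F_p) = t.
Proof. move=> pp. by rewrite natr_Zp. Qed.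

Lemma NT2 p : prime p -> (p %% 4 = 1)%N -> exists t, (p %| t ^ 2 + 1)%N.
Proof.
move=> pp p4.
set u := (p %/ 4)%N.
have hp : (4 * u + 1 = p)%N by rewrite /u {2}(divn_eq p 4) p4 mulnC.
have u1 : (0 < u)%N.
  by rewrite lt0n; apply/eqP => u0; move: pp; rewrite -hp u0.
have [x /andP[x0 xh]] : exists x : 'F_p, (x != 0) && (x ^+ (2 * u) != 1).
  apply/existsP; apply: contraT; rewrite negb_exists => /forallP H.
  pose rs := enum (predC1 (0 : 'F_p)).
  have := @max_poly_roots _ ('X^(2 * u) - 1) rs.
  have nz : ('X^(2 * u) - 1 : {poly 'F_p}) != 0.
    by rewrite -size_poly_eq0 -[1]/(1%:P) size_XnsubC // muln_gt0.
  move=> /(_ nz); rewrite -[1]/(1%:P) size_XnsubC ?muln_gt0 //.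
  have -> : size rs = p.-1 by rewrite -cardE cardC1 card_Fp.
  move=> Hr.
  have : (p.-1 < (2 * u).+1)%N.
    apply: Hr; last exact: enum_uniq.
    apply/allP => x; rewrite mem_enum !inE => x0.
    by rewrite rootE !hornerE subr_eq0; move: (H x); rewrite x0 /= negbK.
  rewrite -hp => h; exfalso; lia.
have hx : x ^+ (2 * u) ^+ 2 = 1.
  rewrite -exprM mulnC mulnA.
  apply: (mulIf x0); rewrite mul1r -exprSr -addn1 -[(2*2)%N]/4%N hp.
  by move: (expf_card x); rewrite card_Fp.
move/eqP: hx; rewrite sqrf_eq1 (negPf xh) /= => /eqP hx.
exists (x ^+ u : 'F_p).
rewrite -Fp_nat_eq0 // natrD natrX Fp_val // -exprM mulnC hx.
by rewrite addrC subrr.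
Qed.

Lemma Fp_sq_inj p (i j : nat) : prime p -> (i.*2 < p)%N -> (j.*2 < p)%N ->
  (i%:R ^+ 2 : 'F_p) = j%:R ^+ 2 -> i = j.
Proof.
move=> pp hi hj /eqP; rewrite -subr_eq0 subr_sqr mulf_eq0 => /orP[|].
  rewrite subr_eq0 => /eqP e1.
  have := val_Fp_nat pp i; rewrite e1 val_Fp_nat // !modn_small //; lia.
rewrite -natrD Fp_nat_eq0 // => hd.
have : (i + j < p)%N by lia.
have [h0|hpos] := posnP (i + j); first by clear hd; lia.
by rewrite ltnNge (dvdn_leq hpos hd).
Qed.

Lemma NT3 p e : prime p -> odd p -> exists i k : nat, (p %| i ^ 2 + k ^ 2 + e)%N.
Proof.
move=> pp po.
set h := p./2.
have hp : (h.*2.+1 = p)%N by rewrite /h -{2}(odd_double_half p) po.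
have [/existsP[i /existsP[k H]]|H] :=
  boolP [exists i : 'I_h.+1, exists k : 'I_h.+1, (p %| i ^ 2 + k ^ 2 + e)%N].
  by exists i, k.
pose F (s : 'I_h.+1 + 'I_h.+1) : 'F_p :=
  match s with inl i => (i : nat)%:R ^+ 2 | inr k => - (e%:R) - (k : nat)%:R ^+ 2 end.
have Finj : injective F.
  have hlt : forall i : 'I_h.+1, ((i : nat).*2 < p)%N.
    by move=> i; rewrite -hp ltnS leq_double -ltnS.
  case=> [i|k] [j|l] /=.
  - by move/(Fp_sq_inj pp (hlt i) (hlt j)) => ij; congr inl; apply: val_inj.
  - move=> /eqP; rewrite -subr_eq0.
    have -> : (i : nat)%:R ^+ 2 - (- e%:R - (l : nat)%:R ^+ 2) = ((i ^ 2 + l ^ 2 + e)%N%:R : 'F_p).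
      by rewrite !natrD !natrX; ring.
    rewrite Fp_nat_eq0 // => hd.
    by move: H; rewrite negb_exists => /forallP /(_ i); rewrite negb_exists => /forallP /(_ l); rewrite hd.
  - move=> /eqP; rewrite -subr_eq0.
    have -> : - e%:R - (k : nat)%:R ^+ 2 - (j : nat)%:R ^+ 2 = - ((j ^ 2 + k ^ 2 + e)%N%:R : 'F_p).
      by rewrite !natrD !natrX; ring.
    rewrite oppr_eq0 Fp_nat_eq0 // => hd.
    by move: H; rewrite negb_exists => /forallP /(_ j); rewrite negb_exists => /forallP /(_ k); rewrite hd.
  - move/eqP; rewrite -subr_eq0.
    have -> : - e%:R - (k : nat)%:R ^+ 2 - (- e%:R - (l : nat)%:R ^+ 2) = (l : nat)%:R ^+ 2 - (k : nat)%:R ^+ 2 :> 'F_p by ring.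
    by rewrite subr_eq0 => /eqP/(Fp_sq_inj pp (hlt l) (hlt k)) lk; congr inr; apply: val_inj.
have := leq_card F Finj; rewrite card_sum !card_ord (Fp_cast pp) -hp; lia.
Qed.


Lemma ord_p (G : finZmodType) (x : G) p : prime p -> x *+ p = 0 -> x != 0 -> #[x]%g = p.
Proof.
move=> pp hx x0.
have : (#[x]%g %| p)%N by rewrite order_dvdn zmodXgE hx.
move=> hd; case/primeP: pp => _ /(_ _ hd) /orP[|/eqP //].
by rewrite order_eq1 => /eqP x1; move: x0; rewrite x1 zmod1gE eqxx.
Qed.

Lemma INV (G : finZmodType) (H : {group G}) (x : G) p j : prime p -> x *+ p = 0 ->
  ~~ (p %| j)%N -> x *+ j \in H -> x \in H.
Proof.
move=> pp hx pj hj.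
have [->|x0] := eqVneq x 0; first exact: (group1 H).
have ox := ord_p pp hx x0.
have cu : ((j%:R : 'F_p) \is a GRing.unit) by rewrite unitFpE // prime_coprime.
pose u : nat := ((j%:R : 'F_p)^-1 : 'F_p).
have ju : (j * u %% p = 1)%N.
  rewrite -(val_Fp_nat pp) natrM Fp_val // mulrV //.
have -> : x = ((x *+ j) ^+ u)%g.
  by rewrite zmodXgE -mulrnA -[x *+ (j * u)]zmodXgE -expg_mod_order ox ju expg1.
exact: groupX.
Qed.


Lemma valp (G : finZmodType) (lam : G -> G -> rat) : linking_form lam ->
  forall u v p, (0 < p)%N -> u *+ p = 0 -> exists c : nat, eqQZ (lam u v) (c%:R / p%:R).
Proof.
move=> h u v p p0 hu.
have := lam_tors_l h v hu; rewrite /qz_zero => /intrP [m hm].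
have pn0 : (p%:R : rat) != 0 by rewrite pnatr_eq0 -lt0n.
have pz0 : (p%:Z != 0) by rewrite -lt0n.
exists `|(m %% p)%Z|%N.
have hge : (0 <= (m %% p)%Z) := modz_ge0 m pz0.
have hc : ((`|(m %% p)%Z|%N)%:R : rat) = ((m %% p)%Z)%:~R.
  by rewrite pmulrn gez0_abs.
have hl : lam u v = m%:~R / p%:R by rewrite -hm mulrC mulKf.
rewrite /eqQZ hl hc.
have -> : m%:~R / p%:R - (m %% p)%Z%:~R / p%:R = ((m %/ p)%Z)%:~R :> rat.
  rewrite {1}(divz_eq m p) -mulrBl intrD addrK intrM.
  by rewrite -[(p%:Z)%:~R]pmulrn mulfK.
exact: intr_int.
Qed.

Lemma lam_sq (G : finZmodType) (lam : G -> G -> rat) : linking_form lam ->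
  forall x i, eqQZ (lam (x *+ i) (x *+ i)) ((i * i)%:R * lam x x).
Proof.
move=> h x i; apply: eqQZ_trans (lamMnl h _ _ _) _.
rewrite natrM -mulrA; apply: eqQZ_Mn; exact: lamMnr.
Qed.

Lemma lam00 (G : finZmodType) (lam : G -> G -> rat) : linking_form lam ->
  qz_zero (lam 0 0).
Proof.
move=> h; have := lam_sq h 0 0; rewrite mulr0n mul0r => H.
by apply: eqQZ_qz H _; rewrite /qz_zero int_num0.
Qed.

Definition has_iso (G : finZmodType) (lam : G -> G -> rat) :=
  exists g : (G * G)%type, g != 0 /\ qz_zero (double_form lam g g).

Lemma caseA (G : finZmodType) (lam : G -> G -> rat) : linking_form lam ->
  forall p, prime p -> (p %% 4 = 1)%N -> (p %| #|G|)%N -> has_iso lam.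
Proof.
move=> h p pp p4 pG.
have pG' : (p %| #|[set: G]|)%N by rewrite cardsT.
have [x _ ox] := Cauchy pp pG'.
have hx : x *+ p = 0 by rewrite -ox -zmodXgE expg_order.
have x0 : x != 0 by rewrite -zmod1gE -order_gt1 ox prime_gt1.
have [t ht] := NT2 pp p4.
have [w hw] : exists w, (t ^ 2 + 1 = w * p)%N by exists ((t ^ 2 + 1) %/ p)%N; rewrite divnK.
exists (x, x *+ t); split.
  by apply/eqP => /(congr1 fst) /= x0'; rewrite x0' eqxx in x0.
rewrite /double_form /=.
apply: eqQZ_qz (eqQZ_D (eqQZ_refl _) (lam_sq h x t)) _.
have -> : lam x x + (t * t)%:R * lam x x = w%:R * (p%:R * lam x x).
  by rewrite mulrA -natrM -hw natrD natrX; ring.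
by apply: qzMn; apply: lam_tors_l.
Qed.

Lemma caseB1 (G : finZmodType) (lam : G -> G -> rat) : linking_form lam ->
  forall p (z : G), z *+ (p * p) = 0 -> z *+ p != 0 -> has_iso lam.
Proof.
move=> h p z hz hzp.
exists (z *+ p, 0); split.
  by apply/eqP => /(congr1 fst) /= x0'; rewrite x0' eqxx in hzp.
rewrite /double_form /=.
apply: qzD; last exact: lam00.
apply: eqQZ_qz (lam_sq h z p) _.
exact: lam_tors_l.
Qed.

Lemma tors_mul (G : finZmodType) (x : G) p n : x *+ p = 0 -> x *+ n *+ p = 0.
Proof. by move=> hx; rewrite -mulrnA mulnC mulrnA hx mul0rn. Qed.

Lemma tors_div (G : finZmodType) (x : G) p n : x *+ p = 0 -> (p %| n)%N -> x *+ n = 0.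
Proof. by move=> hx /dvdnP [q ->]; rewrite mulnC mulrnA hx mul0rn. Qed.

Lemma comb0 (G : finZmodType) (a b : G) p i j : prime p -> a *+ p = 0 -> b *+ p = 0 ->
  a != 0 -> b \notin <[a]>%g -> a *+ i + b *+ j = 0 -> (p %| i)%N && (p %| j)%N.
Proof.
move=> pp ha hb a0 hbn e.
case pj: (p %| j)%N.
  move: e; rewrite (tors_div hb pj) addr0 => e.
  by rewrite andbT -(ord_p pp ha a0) order_dvdn zmodXgE e.
exfalso; move/negP: hbn; apply; apply: (INV pp hb (negbT pj)).
have -> : b *+ j = ((a ^+ i)^-1)%g by rewrite zmodVgE zmodXgE; apply/eqP; rewrite -addr_eq0 addrC e.
by rewrite groupV mem_cycle.
Qed.

Lemma iso_single (G : finZmodType) (lam : G -> G -> rat) : linking_form lam ->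
  forall u c p, u != 0 -> (0 < p)%N -> eqQZ (lam u u) (c%:R / p%:R) -> (p %| c)%N -> has_iso lam.
Proof.
move=> h u c p u0 p0 hu pc.
exists (u, 0); split.
  by apply/eqP => /(congr1 fst) /= x0'; rewrite x0' eqxx in u0.
rewrite /double_form /=; apply: qzD; last exact: lam00.
apply: eqQZ_qz hu _.
move/dvdnP: pc => [q ->]; rewrite natrM mulfK ?pnatr_eq0 -?lt0n //.
exact: qz_nat.
Qed.

Lemma caseB2 (G : finZmodType) (lam : G -> G -> rat) : linking_form lam ->
  forall p (a b : G), prime p -> odd p -> a *+ p = 0 -> b *+ p = 0 -> a != 0 ->
  b \notin <[a]>%g -> has_iso lam.
Proof.
move=> h p a b pp po ha hb a0 hbn.
have p0 : (0 < p)%N := prime_gt0 pp.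
have pn0 : (p%:R : rat) != 0 by rewrite pnatr_eq0 -lt0n.
have [A hA] := valp h a p0 ha.
have [B hB] := valp h b p0 ha.
case pA: (p %| A)%N; first exact: iso_single a0 p0 hA pA.
set b' := b *+ A + a *+ ((p - 1) * B).
have hb' : b' *+ p = 0 by rewrite /b' mulrnDl !tors_mul // addr0.
have hab' : qz_zero (lam a b').
  apply: eqQZ_qz (lamDr h _ _ _) _.
  apply: eqQZ_qz (eqQZ_D (lamMnr h _ _ _) (lamMnr h _ _ _)) _.
  apply: eqQZ_qz (eqQZ_D (eqQZ_Mn _ hB) (eqQZ_Mn _ hA)) _.
  have -> : A%:R * (B%:R / p%:R) + ((p - 1) * B)%:R * (A%:R / p%:R) = (A * B)%:R :> rat.
    rewrite natrM natrB ?prime_gt0 // natrM; field; exact: pn0.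
  exact: qz_nat.
have hb'n : b' \notin <[a]>%g.
  apply/negP => hin; move/negP: hbn; apply; apply: (INV pp hb (negbT pA)).
  have -> : b *+ A = (b' * (a ^+ ((p - 1) * B))^-1)%g.
    by rewrite zmodMgE zmodVgE zmodXgE /b' addrK.
  by rewrite groupM ?groupV ?mem_cycle.
have b'0 : b' != 0.
  by apply: contraNneq hb'n => ->; rewrite -zmod1gE group1.
have [D hD] := valp h b' p0 hb'.
case pD: (p %| D)%N; first exact: iso_single b'0 p0 hD pD.
have [i [k hik]] := NT3 ((p - 1) * D) pp po.
have [j [l hjl]] := NT3 A pp po.
exists (a *+ i + b' *+ j, a *+ k + b' *+ l); split.
  apply/eqP => e.
  have /andP[pi _] := comb0 pp ha hb' a0 hb'n (congr1 fst e).
  have /andP[pk _] := comb0 pp ha hb' a0 hb'n (congr1 snd e).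
  have : (p %| (p - 1) * D)%N.
    have H2 : (p %| i ^ 2 + k ^ 2)%N by rewrite dvdn_add // dvdn_exp.
    by rewrite -(dvdn_addr _ H2).
  rewrite Euclid_dvdM // pD orbF => hp1.
  have p1 : (0 < p - 1)%N by rewrite subn_gt0 prime_gt1.
  by move: (dvdn_leq p1 hp1); rewrite leqNgt ltn_subrL p0.
rewrite /double_form /=.
apply: eqQZ_qz (eqQZ_D (lam_quad h i j hab') (lam_quad h k l hab')) _.
apply: eqQZ_qz (eqQZ_D (eqQZ_D (eqQZ_Mn _ hA) (eqQZ_Mn _ hD)) (eqQZ_D (eqQZ_Mn _ hA) (eqQZ_Mn _ hD))) _.
set X := ((i * i + k * k) * A + (j * j + l * l) * D)%N.
have pX : (p %| X)%N.
  have H1 : (p %| (i ^ 2 + k ^ 2 + (p - 1) * D) * A + (j ^ 2 + l ^ 2 + A) * D)%N.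
    by apply: dvdn_add; apply: dvdn_mulr.
  have hq : p = (p - 1).+1 by rewrite subn1 prednK.
  move: H1; set q := (p - 1)%N.
  have E : ((i ^ 2 + k ^ 2 + q * D) * A + (j ^ 2 + l ^ 2 + A) * D = X + q.+1 * (D * A))%N.
    rewrite /X !expnS !expn0 !muln1; ring.
  by rewrite E -hq dvdn_addl // dvdn_mulr.
move/dvdnP: pX => [w hw].
have -> : (i * i)%:R * (A%:R / p%:R) + (j * j)%:R * (D%:R / p%:R) +
  ((k * k)%:R * (A%:R / p%:R) + (l * l)%:R * (D%:R / p%:R)) = (X%:R / p%:R : rat).
  rewrite /X !natrD !natrM; field; exact: pn0.
by rewrite hw natrM mulfK //; exact: qz_nat.
Qed.


Lemma tors_S (G : finZmodType) p (S : {group G}) (u : G) : prime p ->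
  (p.-Sylow([set: G]) S)%g -> u *+ p = 0 -> u \in S.
Proof.
move=> pp sylS hu.
have nS : (S <| [set: G])%g by rewrite -sub_abelian_normal ?subsetT ?zmod_abelian.
rewrite (mem_normal_Hall sylS nS (in_setT u)) /p_elt.
apply: (@pnat_dvd _ p); last exact: pnat_id.
by rewrite order_dvdn zmodXgE hu.
Qed.

Lemma core (G : finZmodType) (lam : G -> G -> rat) : linking_form lam ->
  (forall p, prime p -> (p %| #|G|)%N -> (p %% 4 = 3)%N /\ exists m, #|G| = (p * m)%N /\ ~~ (p %| m)%N) ->
  forall x y : G, x != 0 -> qz_zero (lam x x + lam y y) -> False.
Proof.
move=> h HG x y x0 hxy.
have ox1 : (1 < #[x]%g)%N by rewrite order_gt1 zmod1gE.
set p := pdiv #[x]%g.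
have pp : prime p := pdiv_prime ox1.
have pG : (p %| #|G|)%N.
  by apply: dvdn_trans (pdiv_dvd _) _; rewrite -cardsT order_dvdG ?in_setT.
have [p4 [m [hn pm]]] := HG p pp pG.
have nG : forall u : G, u *+ #|G| = 0.
  by move=> u; rewrite -zmodXgE -cardsT expg_cardG ?in_setT.
set x' := x *+ m; set y' := y *+ m.
have hx' : x' *+ p = 0 by rewrite /x' -mulrnA mulnC -hn nG.
have x'0 : x' != 0.
  apply/negP => /eqP e; move/negP: pm; apply.
  apply: dvdn_trans (pdiv_dvd _) _; by rewrite order_dvdn zmodXgE zmod1gE -/x' e.
have hq : qz_zero (lam x' x' + lam y' y').
  apply: eqQZ_qz (eqQZ_D (lam_sq h x m) (lam_sq h y m)) _.
  by rewrite -mulrDr; apply: qzMn.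
have [S sylS] := Sylow_exists p [set: G].
have cS : #|S| = p.
  have m0 : (0 < m)%N by rewrite lt0n; apply: contraNneq pm => ->.
  rewrite (card_Hall sylS) cardsT p_part hn (lognM _ (prime_gt0 pp) m0).
  rewrite logn_prime // eqxx.
  have -> : logn p m = 0%N.
    apply/eqP; rewrite -leqn0 leqNgt logn_gt0 mem_primes pp /=.
    by rewrite (negPf pm) andbF.
  by rewrite expn1.
have Sx : S :=: <[x']>%g.
  apply/eqP; rewrite eq_sym eqEcard cycle_subG (tors_S pp sylS hx') /=.
  by rewrite cS -orderE (ord_p pp hx' x'0).
have mS : forall u : G, exists c, u *+ m = x' *+ c.
  move=> u; have : u *+ m \in S.
    by apply: (tors_S pp sylS); rewrite -mulrnA mulnC -hn nG.
  by rewrite Sx => /cycleP [c ->]; exists c; rewrite zmodXgE.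
set r := lam x' x'.
have hr : qz_zero r.
  have [c hc] := mS y.
  have h1 : qz_zero ((1 + c * c)%N%:R * r).
    rewrite natrD mulrDl mul1r; apply: eqQZ_qz (eqQZ_D (eqQZ_refl _) (eqQZ_sym (lam_sq h x' c))) _.
    by rewrite -hc.
  apply: (qz_coprime _ h1 (lam_tors_l h x' hx')).
  rewrite coprime_sym prime_coprime // addnC.
  by have := NT1 c pp p4; rewrite -mulnn. 
have [_ _ nd] := h; case: (nd _ x'0) => z; apply/negP; apply/negPn.
have [c hc] := mS z.
apply: (qz_coprime (_ : coprime m p) _ (lam_tors_l h z hx')).
  by rewrite coprime_sym prime_coprime.
apply: eqQZ_qz (eqQZ_sym (lamMnr h _ _ _)) _.
rewrite hc; apply: eqQZ_qz (lamMnr h _ _ _) _.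
exact: qzMn.
Qed.

Lemma iso_not_triv (G : finZmodType) (lam : G -> G -> rat) :
  has_iso lam -> ~ trivial_isotropic_cone (double_form lam).
Proof. by move=> [g [g0 hg]] T; move: g0; rewrite (T g hg) eqxx. Qed.

Lemma logn_le1 (G : finZmodType) (lam : G -> G -> rat) : linking_form lam ->
  trivial_isotropic_cone (double_form lam) -> forall p, prime p -> odd p ->
  (logn p #|G| <= 1)%N.
Proof.
move=> h T p pp po; rewrite leqNgt; apply/negP => l2.
have [S sylS] := Sylow_exists p [set: G].
have cS : #|S| = (p ^ logn p #|G|)%N by rewrite (card_Hall sylS) cardsT p_part.
have pS : (p < #|S|)%N.
  rewrite cS; apply: (@leq_trans (p ^ 2)).
    by rewrite -mulnn -{1}(muln1 p) ltn_pmul2l ?prime_gt0 ?prime_gt1.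
  by rewrite (leq_exp2l _ _ (prime_gt1 pp)).
have [/existsP[z /andP[zS hz]]|H] := boolP [exists z in S, z *+ p != 0].
  have pz : (p.-elt z)%g := mem_p_elt (pHall_pgroup sylS) zS.
  have [e he] := p_natP pz.
  have e2 : (1 < e)%N.
    rewrite ltnNge; apply/negP => e1; move/negP: hz; apply; apply/eqP.
    rewrite -zmodXgE; apply/eqP; rewrite -order_dvdn he.
    by rewrite -{2}(expn1 p) dvdn_exp2l.
  pose z' := (z ^+ (p ^ (e - 2)))%g.
  have oz' : #[z']%g = (p ^ 2)%N.
    rewrite /z' orderXdiv he; last by rewrite dvdn_exp2l // leq_subr.
    rewrite -expnB ?leq_subr ?prime_gt0 //; congr (expn p); lia.
  apply: (iso_not_triv _ T); apply: (caseB1 h (p := p) (z := z')).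
    by rewrite -zmodXgE; apply/eqP; rewrite -order_dvdn oz' mulnn.
  apply/negP => /eqP e'; move: e'; rewrite -zmodXgE => /eqP; rewrite -order_dvdn oz'.
  by apply/negP; rewrite -{2}(expn1 p) (dvdn_Pexp2l _ _ (prime_gt1 pp)).
have Sn1 : (S :!=: 1)%g.
  by apply: contraTneq pS => ->; rewrite cards1 -leqNgt prime_gt0.
have [a aS a1] := trivgPn _ Sn1.
have ha : a *+ p = 0.
  by apply/eqP; move: H; rewrite negb_exists => /forallP /(_ a); rewrite aS negbK.
have a0 : a != 0 by rewrite -zmod1gE.
have : ~~ (S \subset <[a]>%g).
  apply/negP => /subset_leq_card; rewrite -orderE (ord_p pp ha a0) leqNgt pS //.
case/subsetPn => b bS bn.
have hb : b *+ p = 0.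
  by apply/eqP; move: H; rewrite negb_exists => /forallP /(_ b); rewrite bS negbK.
exact: (iso_not_triv (caseB2 h pp po ha hb a0 bn) T).
Qed.

Theorem mainTheorem4 (G : finZmodType) (lam : G -> G -> rat) :
  odd #|G| -> linking_form lam ->
  (trivial_isotropic_cone (double_form lam) <-> distinct_primes_3mod4 #|G|).
Proof.
move=> hodd h; split.
- move=> T; apply: dp_build; first exact: odd_gt0.
  move=> p pp pd.
  have po : odd p.
    case: (even_prime pp) => // p2; move: pd hodd; rewrite p2 dvdn2 => /negP; done.
  split; last exact: (logn_le1 h T pp po).
  have : (p %% 4 = 1 \/ p %% 4 = 3)%N.
    move: po; rewrite {1}(divn_eq p 4) oddD oddM andbF /=.
    have : (p %% 4 < 4)%N by rewrite ltn_pmod.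
    by case: (p %% 4)%N => [|[|[|[|]]]] //= _ _; [left|right].
  case=> // p1; exfalso; exact: (iso_not_triv (caseA h pp p1 pd) T).
- move=> D; have HG := dp_char D.
  move=> [x y]; rewrite /double_form /= => hq.
  have [x0|x0] := eqVneq x 0; last by case: (core h HG x0 hq).
  have [y0|y0] := eqVneq y 0; last by case: (@core _ _ h HG y x y0); rewrite addrC.
  by rewrite x0 y0.
Qed.
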